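(* Let $G$ be a simple undirected connected Laplacian integral graph with Laplacian $L$, and let $u,v$ be distinct vertices with $N(u)\setminus\{v\}=N(v)\setminus\{u\}$. Let $M=(\mathbf e_u-\mathbf e_v)(\mathbf e_u-\mathbf e_v)^T$ and set $\alpha=-\tfrac34$ if $u$ and $v$ are adjacent in $G$ and $\alpha=\tfrac14$ otherwise (so that the edge between $u$ and $v$ gets weight $\tfrac14$). Then $L^\alpha=L+\alpha M$ exhibits perfect state transfer between $u$ and $v$ at time $2\pi$, and $L^\alpha$ is periodic at every other vertex at time $2\pi$.
   Context: A graph is Laplacian integral if all eigenvalues of its Laplacian $L=D-A$ are integers. $N(u)$ is the neighbourhood of $u$; $\mathbf e_u$ is the standard basis vector of $u$. For a real symmetric $H$, $U_H(t)=\exp(-itH)$; $H$ exhibits perfect state transfer between distinct $u,v$ at time $\tau$ if $U_H(\tau)\mathbf e_u=\gamma\mathbf e_v$ for some $\gamma\in\mathbb C$; $H$ is periodic at $w$ at time $\tau\ne0$ if $U_H(\tau)\mathbf e_w=\gamma\mathbf e_w$ for some $\gamma\in\mathbb C$. *)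

(* Defs.v *)
From mathcomp Require Import all_boot all_order all_algebra.
From mathcomp Require Import all_classical all_reals all_analysis.
From mathcomp Require Import complex.
Import GRing.Theory Num.Theory.
Import numFieldNormedType.Exports.
Set Implicit Arguments.
Unset Strict Implicit.
Unset Printing Implicit Defensive.
Local Open Scope classical_set_scope.
Local Open Scope complex_scope.
Local Open Scope ring_scope.

Definition simple_graph n (adj : rel 'I_n) : Prop :=
  symmetric adj /\ irreflexive adj.

Definition connected_graph n (adj : rel 'I_n) : Prop :=
  forall x y : 'I_n, connect adj x y.

Definition nbhd n (adj : rel 'I_n) (u : 'I_n) : {set 'I_n} := [set w | adj u w].

Definition deg n (adj : rel 'I_n) (u : 'I_n) : nat := #|nbhd adj u|.

Definition laplacian (K : pzRingType) n (adj : rel 'I_n) : 'M[K]_n :=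
  \matrix_(i, j) (if i == j then (deg adj i)%:R else - (adj i j)%:R).

Definition laplacian_integral (R : rcfType) n (adj : rel 'I_n) : Prop :=
  forall a : R[i], eigenvalue (laplacian R[i] adj) a ->
    exists z : int, a = z%:~R.

Definition evec (K : pzRingType) n (u : 'I_n) : 'cV[K]_n := delta_mx u 0.

Definition expmx_partial (R : rcfType) n (A : 'M[R[i]]_n) (N : nat) : 'M[R[i]]_n :=
  \sum_(k < N) (k`!%:R)^-1 *: A ^+ k.

Definition expmx (R : realType) n (A : 'M[R[i]]_n) : 'M[R[i]]_n :=
  \matrix_(i, j)
    (lim ((fun N => (expmx_partial A N i j : (R[i])^o)) @ \oo) : R[i]).

Definition U_H (R : realType) n (H : 'M[R[i]]_n) (t : R) : 'M[R[i]]_n :=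
  expmx ((- 'i * t%:C) *: H).

Definition pst (R : realType) n (H : 'M[R[i]]_n) (u v : 'I_n) (tau : R) : Prop :=
  u != v /\ exists gamma : R[i], U_H H tau *m evec _ u = gamma *: evec _ v.

Definition periodic_at (R : realType) n (H : 'M[R[i]]_n) (w : 'I_n) (tau : R) : Prop :=
  tau != 0 /\ exists gamma : R[i], U_H H tau *m evec _ w = gamma *: evec _ w.

(* Main.v *)
Require Import Defs.
From mathcomp Require Import all_boot all_order all_algebra.
From mathcomp Require Import all_classical all_reals all_analysis.
From mathcomp Require Import complex.
From mathcomp Require Import ring.
Import GRing.Theory Num.Theory.
Import numFieldNormedType.Exports.
Local Open Scope complex_scope.
Local Open Scope classical_set_scope.
Local Open Scope ring_scope.

Section S.
Variable R : realType.
Lemma normC_real (x : R) : `|x%:C| = `|x|%:C.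
Proof. by rewrite normc_def /= expr0n addr0 sqrtr_sqr. Qed.

Lemma cvg_Cof (f : nat -> R) (a : R) : f @ \oo --> a ->
  (fun N => ((f N)%:C : R[i]^o)) @ \oo --> (a%:C : R[i]^o).
Proof.
move=> /cvgrPdist_lt fa; apply/cvgrPdist_lt => e e0.
have : 0 < complex.Re e by move: e0; rewrite ltcE => /andP[_].
move=> /fa; apply: filterS => N.
have -> : e = (complex.Re e)%:C.
  move: e0; rewrite ltcE; case: (e) => er ei /= /andP[/eqP -> _]. by [].
rewrite -rmorphB /= normC_real ltcR; done.
Qed.

Lemma expi_coeff (t : R) k : (k`!%:R)^-1 * ('i * t%:C)^+k =
  (cos_coeff t k)%:C + 'i * (sin_coeff t k)%:C.
Proof.
rewrite /cos_coeff /sin_coeff /= !rmorphM /= !rmorphXn /= rmorphN1 fmorphV /= !rmorph_nat exprMn.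
have -> : 'i ^+ k = 'i ^+ (odd k) * (-1) ^+ k./2 :> R[i].
  by rewrite -{1}(odd_double_half k) exprD -mul2n exprM sqrCi.
case/boolP: (odd k) => hk /=.
  have -> : k.-1./2 = k./2.
    by rewrite -{1}(odd_double_half k) hk add1n /= doubleK.
  ring.
ring.
Qed.

Definition es (z : R[i]) N := \sum_(k < N) (k`!%:R)^-1 * z ^+ k.

Lemma cos_cvg (t : R) : series (cos_coeff t) @ \oo --> cos t.
Proof. rewrite unlock; exact: is_cvg_series_cos_coeff. Qed.
Lemma sin_cvg (t : R) : series (sin_coeff t) @ \oo --> sin t.
Proof. rewrite unlock; exact: is_cvg_series_sin_coeff. Qed.

Lemma es_cvg (t : R) : (fun N => (es ('i * t%:C) N : R[i]^o)) @ \oo -->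
   ((cos t)%:C + 'i * (sin t)%:C : R[i]^o).
Proof.
have -> : (fun N => (es ('i * t%:C) N : R[i]^o)) = 
   (fun N => (series (cos_coeff t) N)%:C + 'i * (series (sin_coeff t) N)%:C).
  apply/funext => N; rewrite /es /series /=.
  under eq_bigr do rewrite expi_coeff.
  by rewrite big_split /= -mulr_sumr !rmorph_sum /= !big_mkord.
apply: cvgD; first exact: cvg_Cof (cos_cvg t).
apply: cvgMl_tmp; exact: cvg_Cof (sin_cvg t).
Qed.

Lemma cos_sin_int (z : int) : cos (z%:~R * (2 * pi)) = 1 :> R /\ sin (z%:~R * (2 * pi)) = 0 :> R.
Proof.
have nat_case : forall n : nat, cos (n%:R * (2 * pi)) = 1 :> R /\ sin (n%:R * (2 * pi)) = 0 :> R.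
  elim => [|n [IHc IHs]]; first by rewrite mul0r cos0 sin0.
  have -> : n.+1%:R * (2 * pi) = n%:R * (2 * pi) + pi *+ 2 :> R.
    by rewrite mulr2n -natr1; ring.
  by rewrite cosD2pi sinD2pi.
case: z => n.
  exact: nat_case.
rewrite NegzE mulrNz mulNr cosN sinN.
have [-> ->] := nat_case n.+1; split => //; exact: oppr0.
Qed.

Lemma C_simpl (a : R) : a%:C + 'i * (0:R)%:C = a%:C :> R[i].
Proof. have -> : (0:R)%:C = 0 :> R[i] by []. by rewrite mulr0 addr0. Qed.

Lemma Cm1 : (-1 : R)%:C = -1 :> R[i].
Proof. by rewrite rmorphN1. Qed.

Lemma es_int (z : int) : (fun N => (es ((- 'i * (2 * pi)%:C) * z%:~R) N : R[i]^o)) @ \oo --> (1 : R[i]^o).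
Proof.
have -> : (- 'i * (2 * pi)%:C) * z%:~R = 'i * (- (z%:~R * (2 * pi)))%:C :> R[i].
  rewrite !rmorphN !rmorphM /= (rmorph_int (real_complex R)); ring.
have [hc hs] := cos_sin_int z.
have := es_cvg (- (z%:~R * (2 * pi))).
by rewrite cosN sinN hc hs (@oppr0 R) C_simpl.
Qed.

Lemma es_half (z : int) : (fun N => (es ((- 'i * (2 * pi)%:C) * (z%:~R + 1/2)) N : R[i]^o)) @ \oo --> (-1 : R[i]^o).
Proof.
have -> : (- 'i * (2 * pi)%:C) * (z%:~R + 1/2) = 'i * (- (z%:~R * (2 * pi) + pi))%:C :> R[i].
  set p := pi; rewrite !rmorphN !rmorphD !rmorphM /= (rmorph_int (real_complex R)) (rmorph_nat (real_complex R)); field; by rewrite ?pnatr_eq0.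
have [hc hs] := cos_sin_int z.
have := es_cvg (- (z%:~R * (2 * pi) + pi)).
by rewrite cosN sinN cosDpi sinDpi hc hs !(@oppr0 R) C_simpl Cm1.
Qed.

Section Mx.
Variable n : nat.
Local Notation C := (R[i]).

Lemma pow_conj (P A : 'M[C]_n) k : P \in unitmx ->
  (invmx P *m A *m P) ^+ k = invmx P *m A ^+ k *m P.
Proof.
move=> Pu; elim: k => [|k IH]; first by rewrite !expr0 mulmx1 mulVmx.
by rewrite !exprS IH -!mulmxE !mulmxA mulmxK // -!mulmxA.
Qed.

Lemma pow_diag (d : 'rV[C]_n) k : diag_mx d ^+ k = diag_mx (map_mx (fun a => a ^+ k) d).
Proof.
elim: k => [|k IH].
  rewrite expr0; apply/matrixP => i j; rewrite !mxE expr0; done.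
rewrite exprS IH -mulmxE mul_diag_mx; apply/matrixP => i j; rewrite !mxE.
by case: eqP => [->|]; rewrite ?mulr1n ?mulr0n ?mulr0 // exprS.
Qed.

Lemma pow_decomp (L M : 'M[C]_n) (lam a : C) :
  L *m M = lam *: M -> M *m L = lam *: M -> M *m M = 2 *: M ->
  forall k, (L + a *: M) ^+ k = L ^+ k + (((lam + 2 * a) ^+ k - lam ^+ k) / 2) *: M.
Proof.
move=> LM ML MM.
have LkM : forall k, L ^+ k *m M = lam ^+ k *: M.
  elim => [|k IH]; first by rewrite !expr0 mul1mx scale1r.
  rewrite exprSr -mulmxE -mulmxA LM -scalemxAr IH scalerA. by rewrite exprS.
elim => [|k IH]; first by rewrite !expr0 subrr mul0r scale0r addr0.
rewrite exprSr IH -!mulmxE mulmxDl !mulmxDr -!scalemxAl -!scalemxAr LkM ML MM.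
rewrite exprSr -mulmxE -addrA; congr (_ + _).
rewrite !scalerA -!scalerDl; congr (_ *: _).
rewrite !exprSr; field; by [].
Qed.

Lemma exprZmx (c : C) (A : 'M[C]_n) k : (c *: A) ^+ k = c ^+ k *: A ^+ k.
Proof.
elim: k => [|k IH]; first by rewrite !expr0 scale1r.
by rewrite !exprS IH -!mulmxE -scalemxAl -scalemxAr scalerA.
Qed.

Lemma entry_conj_diag (P : 'M[C]_n) (e : 'rV[C]_n) i j :
  (invmx P *m diag_mx e *m P) i j = \sum_l invmx P i l * e 0 l * P l j.
Proof. by rewrite mul_mx_diag mxE; apply: eq_bigr => l _; rewrite mxE. Qed.

Lemma expmx_entry (L M P : 'M[C]_n) (D : 'rV[C]_n) (lam a c : C) i j N :
  P \in unitmx -> L = invmx P *m diag_mx D *m P ->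
  L *m M = lam *: M -> M *m L = lam *: M -> M *m M = 2 *: M ->
  expmx_partial (c *: (L + a *: M)) N i j =
  \sum_l (invmx P i l * P l j) * es (c * D 0 l) N +
  (M i j / 2) * (es (c * (lam + 2 * a)) N - es (c * lam) N).
Proof.
move=> Pu LE LM ML MM.
rewrite /expmx_partial summxE /es.
under [X in _ = X + _]eq_bigr do rewrite big_distrr.
rewrite exchange_big /= -sumrB big_distrr -big_split /=.
apply: eq_bigr => k _.
rewrite exprZmx (pow_decomp _ _ _ a LM ML MM) {1}LE pow_conj // pow_diag.
rewrite mul_mx_diag !mxE !mulrDr !mulr_sumr; congr (_ + _).
  apply: eq_bigr => l _; rewrite !mxE exprMn; ring.
rewrite -[c * lam + _]mulrDr !exprMn; field; by [].
Qed.

Lemma cvg_sum_ord (f : 'I_n -> nat -> C^o) (l : 'I_n -> C^o) :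
  (forall k, f k @ \oo --> l k) -> (fun N => \sum_k f k N) @ \oo --> \sum_k l k.
Proof.
move=> h; apply: (@cvg_big _ _ +%R 0 predT) => //.
exact: add_continuous.
Qed.

Lemma expmx_cvg (L M P : 'M[C]_n) (D : 'rV[C]_n) (lam a c : C) i j :
  P \in unitmx -> L = invmx P *m diag_mx D *m P ->
  L *m M = lam *: M -> M *m L = lam *: M -> M *m M = 2 *: M ->
  (forall l, (fun N => (es (c * D 0 l) N : C^o)) @ \oo --> (1 : C^o)) ->
  (fun N => (es (c * (lam + 2 * a)) N : C^o)) @ \oo --> (-1 : C^o) ->
  (fun N => (es (c * lam) N : C^o)) @ \oo --> (1 : C^o) ->
  (fun N => (expmx_partial (c *: (L + a *: M)) N i j : C^o)) @ \oo -->
     ((1%:M - M) i j : C^o).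
Proof.
move=> Pu LE LM ML MM hD hnu hlam.
have -> : (fun N => (expmx_partial (c *: (L + a *: M)) N i j : C^o)) =
  (fun N => \sum_l (invmx P i l * P l j) * es (c * D 0 l) N +
  (M i j / 2) * (es (c * (lam + 2 * a)) N - es (c * lam) N)).
  by apply/funext => N; exact: expmx_entry.
have -> : (1%:M - M) i j = \sum_l (invmx P i l * P l j) * 1 + M i j / 2 * (-1 - 1).
  have -> : \sum_l invmx P i l * P l j * 1 = (1%:M : 'M[C]_n) i j.
    by under eq_bigr do rewrite mulr1; rewrite -(mulVmx Pu) mxE.
  have -> : M i j / 2 * (-1 - 1) = - M i j by field; rewrite ?pnatr_eq0.
  by rewrite mxE [(- M) i j]mxE.
apply: cvgD.
  apply: cvg_sum_ord => l; apply: cvgMl_tmp; exact: hD.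
apply: cvgMl_tmp; apply: cvgB; [exact: hnu | exact: hlam].
Qed.
End Mx.
End S.

Theorem corollary2p6 (R : realType) (n : nat) (adj : rel 'I_n) (u v : 'I_n) :
  simple_graph adj ->
  connected_graph adj ->
  laplacian_integral R adj ->
  u != v ->
  nbhd adj u :\ v = nbhd adj v :\ u ->
  let M : 'M[R[i]]_n := (evec _ u - evec _ v) *m (evec _ u - evec _ v)^T in
  let alpha : R[i] := if adj u v then - (3%:R / 4%:R) else 1%:R / 4%:R in
  let La : 'M[R[i]]_n := laplacian R[i] adj + alpha *: M in
  pst La u v (2 * pi) /\
  (forall w : 'I_n, w != u -> w != v -> periodic_at La w (2 * pi)).
Proof.
move=> [Hsym Hirr] _ Hint Huv HN M alpha La.
set x : 'cV[R[i]]_n := evec _ u - evec _ v.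
set L := laplacian R[i] adj.
set lam : R[i] := (deg adj u + adj u v)%:R.
have Hdeg : deg adj u = deg adj v.
  by rewrite /deg (cardsD1 v) (cardsD1 u (nbhd adj v)) HN !inE (Hsym u v).
have Hadj : forall i, i != u -> i != v -> adj i u = adj i v.
  move=> i iu iv; have := congr1 (fun S : {set 'I_n} => i \in S) HN.
  by rewrite /= !in_setD1 !inE iu iv /= (Hsym i u) (Hsym i v).
have LE i j : L i j = if i == j then (deg adj i)%:R else - (adj i j)%:R.
  by rewrite /L /laplacian mxE.
have xE i : x i 0 = (i == u)%:R - (i == v)%:R.
  by rewrite /x /evec !mxE !eqxx !andbT.
have LT : L^T = L.
  apply/matrixP => i j; rewrite mxE !LE eq_sym.
  by case: eqP => [->|_] //; rewrite (Hsym j i).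
have Lx : L *m x = lam *: x.
  rewrite /x /evec mulmxBr -!colE; apply/matrixP => i k; rewrite ord1 !mxE !eqxx !andbT.
  rewrite /lam natrD.
  case: (eqVneq i u) => [->|iu].
    rewrite (negbTE Huv) /=; ring.
  case: (eqVneq i v) => [->|iv].
    rewrite /= (Hsym v u) Hdeg; ring.
  rewrite /= (Hadj i iu iv); ring.
have xx : x^T *m x = 2%:M.
  have d1 : delta_mx 0 0 = 1%:M :> 'M[R[i]]_1.
    by apply/matrixP => a b; rewrite !ord1 !mxE.
  rewrite /x /evec [(_ - _)^T]linearB /= !trmx_delta mulmxBl !mulmxBr !mul_delta_mx.
  rewrite !mul_delta_mx_0 ?(eq_sym v) // d1 subr0 sub0r opprK.
  by apply/matrixP => a b; rewrite !ord1 !mxE eqxx /= mulr1n -[2]/(1 + 1).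
have MM : M *m M = 2 *: M.
  by rewrite /M mulmxA -(mulmxA x) xx mul_mx_scalar -scalemxAl.
have LM : L *m M = lam *: M by rewrite /M mulmxA Lx -scalemxAl.
have ML : M *m L = lam *: M.
  by rewrite /M -mulmxA -{1}LT -trmx_mul Lx linearZ /= -scalemxAr.
have Lnorm : L \is normalmx.
  apply/normalmxP.
  suff -> : map_mx Num.conj L^T = L by [].
  rewrite LT; apply/matrixP => i j; rewrite !mxE; case: eqP => _;
    rewrite ?rmorphN ?rmorph_nat //.
have /orthomx_spectralP LD := Lnorm.
set P := spectralmx L in LD; set D := spectral_diag L in LD.
have Pu : P \in unitmx by exact: spectral_unit.
have Dint : forall l, exists z : int, D 0 l = z%:~R.
  move=> l; apply: Hint; apply/eigenvalueP; exists (row l P).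
    have PLDP : P *m L = diag_mx D *m P.
      by rewrite {1}LD !mulmxA mulmxV // mul1mx.
    by rewrite -row_mul PLDP row_mul row_diag_mx -scalemxAl -rowE.
  rewrite rowE mulmx_free_eq0 ?row_free_unit //.
  by apply/eqP => /matrixP/(_ 0 l); rewrite !mxE !eqxx /= => /eqP; rewrite oner_eq0.
set c : R[i] := - 'i * (2 * pi)%:C.
have UE : U_H La (2 * pi) = 1%:M - M.
  apply/matrixP => i j; rewrite /U_H /expmx mxE.
  have h : (fun N => (expmx_partial ((- 'i * (2 * pi)%:C) *: La) N i j : R[i]^o)) @ \oo --> ((1%:M - M) i j : R[i]^o).
    apply: (expmx_cvg _ _ _ _ _ _ _ _ _ _ _ Pu LD LM ML MM).
    - by move=> l; have [z ->] := Dint l; exact: es_int.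
    - have [z ->] : exists z : int, lam + 2 * alpha = z%:~R + 1/2.
        rewrite /lam /alpha; case: (adj u v).
          exists ((deg adj u)%:Z - 1); rewrite intrB /= natrD; field; by rewrite ?pnatr_eq0.
        exists (deg adj u)%:Z; rewrite /= addn0; field; by rewrite ?pnatr_eq0.
      exact: es_half.
    - exact: (es_int _ (Posz (deg adj u + adj u v))).
  exact: (cvg_lim (@norm_hausdorff _ _) h).
have Ue w : U_H La (2 * pi) *m evec _ w = \col_i ((i == w)%:R - x i 0 * x w 0).
  rewrite UE /evec -colE; apply/matrixP => i k; rewrite ord1 !mxE.
  by rewrite big_ord1 !mxE.
split.
  split => //; exists 1; rewrite scale1r Ue xE eqxx (negbTE Huv) subr0.
  apply/matrixP => i k; rewrite ord1 !mxE !eqxx !andbT /=; ring.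
move=> w wu wv; split.
  by apply: lt0r_neq0; rewrite mulr_gt0 // pi_gt0.
exists 1; rewrite scale1r Ue xE (negbTE wu) (negbTE wv) subrr.
apply/matrixP => i k; rewrite ord1 !mxE !eqxx !andbT /=; ring.
Qed.
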